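(* Let $G$ be a nontrivial connected graph of order $n$ and maximum degree $\Delta(G)$. Then $$\max\{\Delta(G),\operatorname{diam}(G)\}\leq prc(G)\leq \chi'(G)+(n-1-\Delta(G)),$$ where the right-hand side equals $n$ if $G$ is class 2 and equals $n-1$ if $G$ is class 1.
   Context: All graphs are simple, finite and undirected. A path in an edge-coloured graph is a rainbow path if its edges receive pairwise distinct colours. An edge-colouring is proper if adjacent edges receive distinct colours. A connected graph $G$ with a proper edge-colouring is properly rainbow connected if every two distinct vertices are joined by a rainbow path. The proper rainbow connection number $prc(G)$ of a nontrivial connected graph $G$ is the minimum number of colours in a proper edge-colouring making $G$ properly rainbow connected. $\chi'(G)$ is the chromatic index; by Vizing's theorem $\chi'(G)\in\{\Delta(G),\Delta(G)+1\}$, and $G$ is class 1 if $\chi'(G)=\Delta(G)$ and class 2 otherwise. $\operatorname{diam}(G)$ is the diameter. *)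

(* Defs.v *)
(* Simple graphs as symmetric irreflexive relations on a finType. *)
From mathcomp Require Import all_boot.
Set Implicit Arguments. Unset Strict Implicit. Unset Printing Implicit Defensive.

Section Graphs.
Variables (T : finType) (e : rel T).

Definition is_min (P : nat -> Prop) (m : nat) : Prop := P m /\ forall k, P k -> m <= k.
Definition is_max (P : nat -> Prop) (m : nat) : Prop := P m /\ forall k, P k -> k <= m.

Definition maxdeg : nat := \max_(v : T) #|[set u | e v u]|.

Definition walk_len (x y : T) (d : nat) : Prop :=
  exists p : seq T, [/\ path e x p, last x p = y & size p = d].
Definition is_dist (x y : T) (d : nat) : Prop := is_min (walk_len x y) d.
Definition is_diam (D : nat) : Prop :=
  is_max (fun d => exists x y, is_dist x y d) D.

(* an edge colouring c (the colour of edge xy is c x y = c y x) that is proper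
   and uses only colours in {0, ..., k-1} *)
Definition proper_edge_colouring (k : nat) (c : T -> T -> nat) : Prop :=
  [/\ forall x y, e x y -> c x y = c y x,
      forall x y, e x y -> c x y < k
    & forall x y z, e x y -> e x z -> y != z -> c x y != c x z].

Definition is_chromatic_index (k : nat) : Prop :=
  is_min (fun k => exists c, proper_edge_colouring k c) k.

Definition rainbow_path (c : T -> T -> nat) (x y : T) (p : seq T) : Prop :=
  [/\ path e x p, last x p = y, uniq (x :: p) & uniq (pairmap c x p)].

Definition properly_rainbow_connected (k : nat) (c : T -> T -> nat) : Prop :=
  proper_edge_colouring k c /\
  forall x y, x != y -> exists p, rainbow_path c x y p.

Definition is_prc (k : nat) : Prop :=
  is_min (fun k => exists c, properly_rainbow_connected k c) k.

End Graphs.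

(* Main.v *)
Require Import Defs.
From mathcomp Require Import all_boot zify.
From Stdlib Require Import Classical.
Set Implicit Arguments. Unset Strict Implicit. Unset Printing Implicit Defensive.

Section Kempe.
Variable T : finType.
Variable g : rel T.
Hypothesis g_sym : symmetric g.
Hypothesis g_irr : irreflexive g.
Variable K : nat.
Variable c : T -> T -> nat.
Hypothesis c_pec : proper_edge_colouring g K c.

Definition sig (col : nat) (x : T) : T :=
  if [pick y | g x y && (c x y == col)] is Some y then y else x.

Lemma sigP col x y : g x y -> c x y = col -> sig col x = y.
Proof.
move=> gxy cxy; rewrite /sig; case: pickP => [z /andP[gxz /eqP cxz]|none].
  case: c_pec => _ _ pr; apply/eqP; apply: contraTT isT => nzy.
  by have := pr x z y gxz gxy nzy; rewrite cxz cxy eqxx.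
by have := none y; rewrite gxy cxy eqxx.
Qed.

Lemma sig_miss col x : sig col x = x <-> (forall y, g x y -> c x y != col).
Proof.
split.
  move=> hs y gxy; apply/negP => /eqP cxy.
  by have := sigP gxy cxy; rewrite hs => exy; rewrite exy g_irr in gxy.
move=> h; rewrite /sig; case: pickP => [z /andP[gxz cxz]|//].
by have := h z gxz; rewrite cxz.
Qed.

Lemma sigK col : involutive (sig col).
Proof.
move=> x; rewrite {2}/sig; case: pickP => [z /andP[gxz /eqP cxz]|none].
  apply: (sigP (y:=x)); first by rewrite g_sym.
  case: c_pec => cs _ _; rewrite -cxz; apply: cs; by rewrite g_sym.
rewrite /sig; case: pickP => [z /andP[gxz cxz]|//].
by have := none z; rewrite gxz cxz.
Qed.

Variables i j : nat.
Definition tau x := sig i (sig j x).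

Lemma tau_inj : injective tau.
Proof. by move=> x y /(congr1 (sig i)); rewrite /tau !sigK => /(congr1 (sig j)); rewrite !sigK. Qed.

Variable w : T.
Hypothesis w_miss : sig i w = w.

Lemma tau_sig n : iter n tau (sig i (iter n tau w)) = w.
Proof.
have E : forall y, tau (sig i (tau y)) = sig i y by move=> y; rewrite /tau sigK sigK.
elim: n => [|n IH]; first by rewrite /= w_miss.
by rewrite iterSr [iter n.+1 _ w]iterS E.
Qed.

Definition KS := [set x | fconnect tau w x].

Lemma KS_w : w \in KS.
Proof. by rewrite inE connect0. Qed.

Lemma KS_sigi x : x \in KS -> sig i x \in KS.
Proof.
rewrite !inE => /iter_findex; set n := findex tau w x => hx.
rewrite fconnect_sym; last exact: tau_inj.
have := fconnect_iter tau n (sig i x).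
by rewrite -hx tau_sig.
Qed.

Lemma KS_sigj x : x \in KS -> sig j x \in KS.
Proof.
move=> hx; have -> : sig j x = sig i (tau x) by rewrite /tau sigK.
apply: KS_sigi; move: hx; rewrite !inE => hx.
exact: connect_trans hx (fconnect1 _ _).
Qed.

Lemma iter_w_eq0 n : n < order tau w -> iter n tau w = w -> n = 0.
Proof.
move=> hn he; have := findex_iter hn; rewrite he.
have := findex_iter (order_gt0 tau w); rewrite /= => ->; by [].
Qed.

Lemma leaf_half x : x \in KS -> sig i x = x -> x != w ->
  (findex tau w x).*2 = order tau w.
Proof.
rewrite inE => hx hs nxw.
set n := findex tau w x; set L := order tau w.
have nL : n < L := findex_max hx.
have hxi : iter n tau w = x := iter_findex hx.
have h2 : iter (n + n) tau w = w by rewrite iterD hxi -{1}hs -hxi tau_sig.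
have n0 : n != 0 by apply: contra nxw => /eqP n0; rewrite -hxi n0.
case: (ltnP (n + n) L) => h.
  by have := iter_w_eq0 h h2; lia.
have : iter (n + n - L) tau w = w.
  by rewrite -{2}h2 -{2}(subnK h) iterD iter_order //; apply: tau_inj.
move=> /iter_w_eq0 => hh. have := hh ltac:(lia). rewrite -addnn; lia.
Qed.

Lemma leaf_uniq x y : x \in KS -> sig i x = x -> x != w ->
  y \in KS -> sig i y = y -> y != w -> x = y.
Proof.
move=> hx sx nx hy sy ny.
have := leaf_half hx sx nx; rewrite -(leaf_half hy sy ny) => h2.
have he : findex tau w x = findex tau w y by lia.
by move: hx hy; rewrite !inE => hx hy; rewrite -(iter_findex hx) -(iter_findex hy) he.
Qed.

Definition swapc (l : nat) := if l == i then j else if l == j then i else l.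
Lemma swapcK : i != j -> involutive swapc.
Proof.
move=> nij l; have nji : (j == i) = false by rewrite eq_sym (negPf nij).
rewrite /swapc; case: (l =P i) => [->|nli]; first by rewrite /= nji eqxx.
case: (l =P j) => [->|nlj]; first by rewrite /= eqxx.
by rewrite (introF eqP nli) (introF eqP nlj).
Qed.

Definition ck x y := if x \in KS then swapc (c x y) else c x y.

Lemma KS_edge x y : g x y -> (c x y == i) || (c x y == j) -> (x \in KS) = (y \in KS).
Proof.
move=> gxy hc.
have hsym : c y x = c x y by case: c_pec => cs _ _; rewrite cs // g_sym.
have gyx : g y x by rewrite g_sym.
case/orP: hc => /eqP hc.
  have e1 : sig i x = y by apply: sigP.
  have e2 : sig i y = x by apply: sigP; rewrite // hsym.
  apply/idP/idP => h; [rewrite -e1 | rewrite -e2]; exact: KS_sigi.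
have e1 : sig j x = y by apply: sigP.
have e2 : sig j y = x by apply: sigP; rewrite // hsym.
apply/idP/idP => h; [rewrite -e1 | rewrite -e2]; exact: KS_sigj.
Qed.

Hypothesis iK : i < K.
Hypothesis jK : j < K.
Hypothesis nij : i != j.

Lemma ck_pec : proper_edge_colouring g K ck.
Proof.
case: c_pec => cs cb cp; split.
- move=> x y gxy; rewrite /ck.
  case hc: ((c x y == i) || (c x y == j)).
    by rewrite (KS_edge gxy hc) (cs _ _ gxy).
  rewrite (cs _ _ gxy) /swapc; move: hc; rewrite (cs _ _ gxy).
  by case: (c y x == i) => //; case: (c y x == j) => //; case: ifP; case: ifP.
- move=> x y gxy; rewrite /ck /swapc; case: ifP => _; last exact: cb.
  by case: ifP => _ //; case: ifP => _ //; exact: cb.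
- move=> x y z gxy gxz nyz; rewrite /ck; case: ifP => _; last exact: cp.
  by rewrite (inj_eq (can_inj (swapcK nij))); exact: cp.
Qed.

Lemma ck_out x y : x \notin KS -> ck x y = c x y.
Proof. by rewrite /ck => /negPf ->. Qed.

Lemma ck_in x y : x \in KS -> ck x y = swapc (c x y).
Proof. by rewrite /ck => ->. Qed.

End Kempe.

Section Deg.
Variable T : finType.

Definition deg (r : rel T) x := #|[set y | r x y]|.
Definition rmv (v : T) (r : rel T) : rel T := fun x y => [&& r x y, x != v & y != v].
Definition missb (g : rel T) c u (l : nat) := [forall y, g u y ==> (c u y != l)].

Lemma rmv_sym v r : symmetric r -> symmetric (rmv v r).
Proof. by move=> rs x y; rewrite /rmv rs; case: (x != v); case: (y != v); rewrite ?andbT ?andbF. Qed.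

Lemma rmv_irr v r : irreflexive r -> irreflexive (rmv v r).
Proof. by move=> ri x; rewrite /rmv ri. Qed.

Lemma deg_sub (r r' : rel T) x : (forall y, r' x y -> r x y) -> deg r' x <= deg r x.
Proof. move=> h; apply: subset_leq_card; apply/subsetP => y; rewrite !inE; exact: h. Qed.

Lemma deg_sub1 (r r' : rel T) x y0 : (forall y, r' x y -> r x y) -> r x y0 -> ~~ r' x y0 ->
  deg r' x < deg r x.
Proof.
move=> h h1 h2; apply: proper_card; apply/properP; split.
  by apply/subsetP => y; rewrite !inE; exact: h.
by exists y0; rewrite !inE.
Qed.

Lemma deg_rmv (r : rel T) v u : symmetric r -> irreflexive r -> r v u ->
  deg r u = (deg (rmv v r) u).+1.
Proof.
move=> rs ri rvu; rewrite /deg (cardsD1 v) inE -rs rvu /= add1n; congr (_.+1).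
apply: eq_card => y; rewrite !inE /rmv andbC; congr (_ && _).
have -> : (u != v) by apply: contraTneq rvu => ->; rewrite ri.
by [].
Qed.

Lemma card_miss1 (g : rel T) k c u : proper_edge_colouring g k.+1 c ->
  deg g u + #|[set l : 'I_k.+1 | missb g c u l]| <= k.+1.
Proof.
case=> cs cb cp; set M := [set l : 'I_k.+1 | missb g c u l].
have hC := cardsC M; rewrite card_ord in hC.
apply: (@leq_trans (#|M| + #|~: M|)); last by rewrite hC.
rewrite addnC leq_add2l.
rewrite /deg -(@card_in_imset _ _ (fun y => (inord (c u y) : 'I_k.+1))).
  apply: subset_leq_card; apply/subsetP => l /imsetP [y]; rewrite !inE => guy ->.
  apply/forallP => /= hh; have := hh y; rewrite guy /= inordK ?eqxx //; exact: cb.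
move=> y1 y2; rewrite !inE => g1 g2 /(congr1 val) /=; rewrite !inordK ?cb // => e.
by case: (eqVneq y1 y2) => // /(cp _ _ _ g1 g2); rewrite e eqxx.
Qed.

Lemma card_miss2 (g : rel T) k c u : proper_edge_colouring g k.+1 c ->
  k.+1 <= deg g u + #|[set l : 'I_k.+1 | missb g c u l]|.
Proof.
case=> cs cb cp; set M := [set l : 'I_k.+1 | missb g c u l].
have hC := cardsC M; rewrite card_ord in hC.
apply: (@leq_trans (#|M| + #|~: M|)); first by rewrite hC.
rewrite addnC leq_add2r.
apply: (leq_trans _ (leq_imset_card (fun y => (inord (c u y) : 'I_k.+1)) [set y | g u y])).
apply: subset_leq_card; apply/subsetP => l; rewrite !inE => /forallPn [y].
rewrite negb_imply negbK => /andP[guy /eqP e]; apply/imsetP; exists y; rewrite ?inE //.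
by apply: val_inj => /=; rewrite inordK; [by rewrite e | exact: cb].
Qed.

Definition efk_prop (k : nat) := forall (r : rel T) v s, symmetric r -> irreflexive r ->
  deg r v <= k -> (forall u, r v u -> u != s -> deg r u < k) -> (r v s -> deg r s <= k) ->
  (exists c, proper_edge_colouring (rmv v r) k c) -> exists c, proper_edge_colouring r k c.

Lemma no_nbr (r : rel T) v K c : symmetric r -> (forall u, ~~ r v u) ->
  proper_edge_colouring (rmv v r) K c -> proper_edge_colouring r K c.
Proof.
move=> rs none [cs cb cp].
have h : forall x y, r x y -> rmv v r x y.
  move=> x y rxy; rewrite /rmv rxy /=.
  have nx : x != v by apply: contraTneq rxy => ->; rewrite (negPf (none y)).
  have ny : y != v by apply: contraTneq rxy => ->; rewrite rs (negPf (none x)).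
  by rewrite nx ny.
split.
- by move=> x y /h; exact: cs.
- by move=> x y /h; exact: cb.
- by move=> x y z /h hy /h hz; exact: cp.
Qed.

End Deg.

Lemma shift_lt a l k : a < k.+1 -> l < k.+1 -> a != l -> (if a < l then a else (a - 1)) < k.
Proof. by case: (ltnP a l) => /= *; lia. Qed.
Lemma shift_inj a b l : a != l -> b != l -> a != b ->
  (if a < l then a else (a - 1)) != (if b < l then b else (b - 1)).
Proof. by case: (ltnP a l) => /= *; case: (ltnP b l) => /= *; lia. Qed.
Lemma shift2_lt a l k : a < k -> (if a < l then a else a.+1) < k.+1.
Proof. by case: (ltnP a l) => /= *; lia. Qed.
Lemma shift2_inj a b l : a != b -> (if a < l then a else a.+1) != (if b < l then b else b.+1).
Proof. by case: (ltnP a l) => /= *; case: (ltnP b l) => /= *; lia. Qed.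
Lemma shift2_ne a l : (if a < l then a else a.+1) != l.
Proof. by case: (ltnP a l) => /= *; lia. Qed.

Section Cfg.
Variable T : finType.
Variables (k : nat) (r : rel T) (v s : T).
Hypothesis r_sym : symmetric r.
Hypothesis r_irr : irreflexive r.
Hypothesis dv : deg r v <= k.+1.
Hypothesis dN : forall u, r v u -> u != s -> deg r u < k.+1.
Hypothesis ds : deg r s <= k.+1.
Hypothesis rvs : r v s.

Local Notation g := (rmv v r).

Definition valid c (S : T -> {set 'I_k.+1}) :=
  [/\ proper_edge_colouring g k.+1 c,
      forall u, r v u -> forall l : 'I_k.+1, l \in S u -> missb g c u l
    & forall u, r v u -> #|S u| = (if u == s then 1 else 2)].

Definition XS (S : T -> {set 'I_k.+1}) (l : 'I_k.+1) := [set u | r v u && (l \in S u)].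
Definition ne (S : T -> {set 'I_k.+1}) := #|[set l : 'I_k.+1 | XS S l != set0]|.

Lemma sumX c S : valid c S ->
  \sum_(l < k.+1) #|XS S l| = (#|[set u | r v u && (u != s)]|).*2.+1.
Proof.
case=> _ _ cc.
have E1 l : #|XS S l| = \sum_(u | r v u) (l \in S u).
  rewrite -sum1_card (eq_bigl (fun u => r v u && (l \in S u))); last by move=> u; rewrite inE.
  by rewrite big_mkcondr /=; apply: eq_bigr => u _; case: (l \in S u).
rewrite (eq_bigr _ (fun l _ => E1 l)) exchange_big /=.
have E2 u : \sum_(l < k.+1) (l \in S u) = #|S u|.
  by rewrite -sum1_card [in RHS]big_mkcond /=; apply: eq_bigr => l _; case: (l \in S u).
rewrite (eq_bigr _ (fun u _ => E2 u)) (bigD1 s) //= cc // eqxx.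
rewrite (eq_bigr (fun _ => 2)); last by move=> u /andP[ru nus]; rewrite cc // (negPf nus).
rewrite sum_nat_const add1n -muln2; congr (_ * _).+1.
by apply: eq_card => u; rewrite inE.
Qed.

Lemma card_ns : #|[set u | r v u && (u != s)]| <= k.
Proof.
have : #|[set u | r v u && (u != s)]| < deg r v.
  apply: proper_card; apply/properP; split.
    by apply/subsetP => u; rewrite !inE => /andP[].
  by exists s; rewrite !inE ?rvs ?eqxx.
move: dv; lia.
Qed.

Lemma odd_sum_ex (n : nat) (F : 'I_n -> nat) : odd (\sum_(l < n) F l) -> exists l, odd (F l).
Proof.
case: (boolP [exists l, odd (F l)]) => [/existsP [l hl]|/existsPn hall]; first by exists l.
have : ~~ odd (\sum_(l < n) F l).
  apply: (big_ind (fun m => ~~ odd m)) => //= x y hx hy.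
  by rewrite oddD (negPf hx) (negPf hy).
by move/negP.
Qed.

Lemma cfg_step c S : valid c S -> (forall l : 'I_k.+1, #|XS S l| != 1) ->
  exists c' S', valid c' S' /\ ne S < ne S'.
Proof.
move=> val h1; have hsum := sumX val; have hns := card_ns.
case: val => cp cm cc.
have [j Xj0] : exists j : 'I_k.+1, #|XS S j| = 0.
  case: (boolP [exists j : 'I_k.+1, #|XS S j| == 0]) => [/existsP [j /eqP hj]|/existsPn hall].
    by exists j.
  exfalso; have : \sum_(l < k.+1) 2 <= \sum_(l < k.+1) #|XS S l|.
    by apply: leq_sum => l _; have := hall l; have := h1 l; lia.
  rewrite sum_nat_const card_ord hsum; lia.
have [i Xio] : exists i : 'I_k.+1, odd #|XS S i|.
  by apply: odd_sum_ex; rewrite hsum /= odd_double.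
have Xi3 : 3 <= #|XS S i|.
  have h0 : #|XS S i| != 0 by apply: contraTneq Xio => ->.
  have h2 : #|XS S i| != 2 by apply: contraTneq Xio => ->.
  have := h1 i; lia.
have nij : i != j by apply: contraTneq Xio => ->; rewrite Xj0.
have nijn : (i : nat) != j by [].
have [w wX] : exists w, w \in XS S i by apply/card_gt0P; lia.
move: (wX); rewrite inE => /andP[wN iw].
have jS : forall u, r v u -> j \notin S u.
  move=> u ru; apply/negP => ju.
  have : u \in XS S j by rewrite inE ru ju.
  by rewrite (cards0_eq Xj0) inE.
have gs := rmv_sym v r_sym; have gi := rmv_irr v r_irr.
have smiss : forall x, r v x -> i \in S x -> sig g c i x = x.
  move=> x rx ix; apply/(sig_miss gi cp) => y gy.
  by have := forallP (cm x rx i ix) y; rewrite gy.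
have wmi := smiss w wN iw.
set KK := KS g c i j w; set c' := ck g c i j w.
pose S' := fun u => if (u \in KK) && (i \in S u) then j |: (S u :\ i) else S u.
have miss_keep : forall u (l : nat), missb g c u l ->
    (u \in KK -> (l != i) && (l != j)) -> missb g c' u l.
  move=> u l hm hl; apply/forallP => y; apply/implyP => guy.
  have := forallP hm y; rewrite guy /= => nl.
  case: (boolP (u \in KK)) => uK; last by rewrite /c' ck_out.
  rewrite /c' ck_in //; case/andP: (hl uK) => nli nlj; rewrite /swapc.
  case: ifP => _; first by rewrite eq_sym.
  by case: ifP => _; first by rewrite eq_sym.
have miss_swap : forall u, u \in KK -> missb g c u i -> missb g c' u j.
  move=> u uK hm; apply/forallP => y; apply/implyP => guy.
  have := forallP hm y; rewrite guy /= => nl.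
  rewrite /c' ck_in // /swapc (negPf nl).
  by case: ifP => hj //; rewrite hj.
have ord_ne : forall a b : 'I_k.+1, a != b -> (a : nat) != b by [].
have neS : forall u (a b : 'I_k.+1), a \in S u -> b \notin S u -> (a : nat) != b.
  by move=> u a b ha hb; apply: ord_ne; apply: contraNneq hb => <-.
exists c', S'; split; first split.
- rewrite /c'; apply: (ck_pec gs cp wmi) => //; exact: ltn_ord.
- move=> u ru l; rewrite /S'; case: ifP => [/andP[uK iu]|hn].
    rewrite in_setU1 in_setD1 => /orP[/eqP ->|/andP[nli lu]].
      exact: miss_swap uK (cm u ru i iu).
    apply: miss_keep (cm u ru l lu) _ => _.
    by rewrite (ord_ne _ _ nli) (neS _ _ _ lu (jS u ru)).
  move=> lu; apply: miss_keep (cm u ru l lu) _ => uK.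
  have niu : i \notin S u by move: hn; rewrite uK /= => ->.
  by rewrite (neS _ _ _ lu niu) (neS _ _ _ lu (jS u ru)).
- move=> u ru; rewrite /S'; case: ifP => [/andP[_ iu]|_]; last exact: cc.
  rewrite cardsU1 in_setD1 (negPf (jS u ru)) andbF add1n -(cc u ru).
  by rewrite [in RHS](cardsD1 i) iu.
apply: proper_card; apply/properP; split.
  apply/subsetP => l; rewrite !inE => /set0Pn [u]; rewrite inE => /andP[ru lu].
  apply/set0Pn; case: (eqVneq l i) => [eli|nli].
    have [u2 u2X u2K] : exists2 u2, u2 \in XS S i & u2 \notin KK.
      case: (boolP [exists u2, (u2 \in XS S i) && (u2 \notin KK)]) =>
        [/existsP [u2 /andP[h h']]|/existsPn hall]; first by exists u2.
      exfalso.
      have sub : forall x, x \in XS S i -> x \in KK.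
        by move=> x hx; have := hall x; rewrite hx /= negbK.
      have sx : forall x, x \in XS S i -> sig g c i x = x.
        by move=> x; rewrite inE => /andP[rx ix]; apply: smiss.
      have : 0 < #|XS S i :\ w| by have := cardsD1 w (XS S i); rewrite wX; lia.
      case/card_gt0P => a; rewrite in_setD1 => /andP[naw aX].
      have : 0 < #|XS S i :\ w :\ a|.
        have := cardsD1 w (XS S i); have := cardsD1 a (XS S i :\ w).
        rewrite wX in_setD1 naw aX /=; lia.
      case/card_gt0P => b; rewrite !in_setD1 => /and3P[nba nbw bX].
      have eab := leaf_uniq gs cp wmi (sub a aX) (sx a aX) naw (sub b bX) (sx b bX) nbw.
      by rewrite eab eqxx in nba.
    exists u2; move: u2X; rewrite !inE => /andP[ru2 iu2].
    by rewrite ru2 /S' (negPf u2K) /= eli iu2.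
  exists u; rewrite inE ru /S'; case: ifP => _ //.
  by rewrite in_setU1 in_setD1 nli lu orbT.
exists j.
  rewrite inE; apply/set0Pn; exists w.
  by rewrite inE wN /S' (KS_w g c i j w) iw /= in_setU1 eqxx.
by rewrite inE negbK; apply/eqP; exact: cards0_eq Xj0.
Qed.

Lemma ne_le S : ne S <= k.+1.
Proof. by rewrite /ne; apply: leq_trans (max_card _) _; rewrite card_ord. Qed.

Lemma cfg_iter n c S : valid c S -> k.+1 - ne S <= n ->
  exists c' S' (l : 'I_k.+1), valid c' S' /\ #|XS S' l| = 1.
Proof.
elim: n c S => [|n IH] c S hv hn;
  (case: (boolP [exists l, #|XS S l| == 1]) => [/existsP [l /eqP hl]|/existsPn hall];
    first by exists c, S, l);
  have [c' [S' [hv' hlt]]] := cfg_step hv (fun l => hall l).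
  by have := ne_le S'; lia.
by apply: (IH c' S' hv'); have := ne_le S'; lia.
Qed.

Lemma cfg_init c : proper_edge_colouring g k.+1 c -> exists S, valid c S.
Proof.
move=> cp.
have : forall u, exists A : {set 'I_k.+1}, r v u ->
    (forall l : 'I_k.+1, l \in A -> missb g c u l) /\ #|A| = (if u == s then 1 else 2).
  move=> u; case: (boolP (r v u)) => ru; last by exists set0.
  have h2 := card_miss2 u cp; have hd := deg_rmv r_sym r_irr ru.
  set M := [set l : 'I_k.+1 | missb g c u l] in h2.
  case: (eqVneq u s) => [eus|nus].
    have hdu : deg r u <= k.+1 by rewrite eus.
    have : 0 < #|M| by lia.
    case/card_gt0P => l lM; exists [set l] => _; split.
      by move=> l'; rewrite inE => /eqP ->; move: lM; rewrite inE.
    by rewrite cards1.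
  have hdu := dN ru nus.
  have : 1 < #|M| by lia.
  move=> h1; have : 0 < #|M| by lia.
  case/card_gt0P => l1 l1M.
  have : 0 < #|M :\ l1| by move: h1; rewrite (cardsD1 l1) l1M /=; lia.
  case/card_gt0P => l2; rewrite in_setD1 => /andP[n21 l2M].
  exists [set l1; l2] => _; split.
    move=> l'; rewrite !inE => /orP[] /eqP ->; [move: l1M | move: l2M]; by rewrite inE.
  by rewrite cards2 eq_sym n21.
move/fin_all_exists => [S hS]; exists S; split => //.
- by move=> u ru; exact: (hS u ru).1.
- by move=> u ru; exact: (hS u ru).2.
Qed.

Lemma reduce c S (l : 'I_k.+1) : efk_prop T k -> valid c S -> #|XS S l| = 1 ->
  exists f, proper_edge_colouring r k.+1 f.
Proof.
move=> IH [cp cm cc] /eqP/cards1P [u Xu].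
have uX : u \in XS S l by rewrite Xu set11.
move: (uX); rewrite inE => /andP[ru lu].
have onlyu : forall w, r v w -> l \in S w -> w = u.
  move=> w rw lw; have : w \in XS S l by rewrite inE rw lw.
  by rewrite Xu inE => /eqP.
have nuv : u != v by apply: contraTneq ru => ->; rewrite r_irr.
have gs := rmv_sym v r_sym.
case: (cp) => cs cb cpr.
pose bad1 x y := g x y && (c x y == l).
pose bad2 x y := ((x == v) && (y == u)) || ((x == u) && (y == v)).
pose r' : rel T := fun x y => [&& r x y, ~~ bad1 x y & ~~ bad2 x y].
have r'r : forall x y, r' x y -> r x y by move=> x y /andP[].
have b1s : forall x y, bad1 x y = bad1 y x.
  move=> x y; rewrite /bad1 gs; case: (boolP (g y x)) => //= gyx.
  by rewrite (cs y x gyx).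
have b2s : forall x y, bad2 x y = bad2 y x.
  by move=> x y; rewrite /bad2 orbC andbC [(y == u) && _]andbC.
have r's : symmetric r' by move=> x y; rewrite /r' r_sym b1s b2s.
have r'i : irreflexive r' by move=> x; rewrite /r' r_irr.
have hb : forall x t, r x t -> ~~ r' x t -> bad1 x t || bad2 x t.
  by move=> x t rt; rewrite /r' rt /= negb_and !negbK.
pose s' := if u == s then u else s.
have nr'vu : ~~ r' v u by apply/negP => /and3P[_ _]; rewrite /bad2 !eqxx.
have cnt : forall w, r v w -> missb g c w l -> l \notin S w ->
    deg r w + #|S w| <= k.+1.
  move=> w rw hm nl.
  have h1 := card_miss1 w cp; have hd := deg_rmv r_sym r_irr rw.
  have : #|l |: S w| <= #|[set l0 : 'I_k.+1 | missb g c w l0]|.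
    apply: subset_leq_card; apply/subsetP => l0; rewrite !inE => /orP[/eqP ->//|].
    exact: cm.
  rewrite cardsU1 nl /= => h3; rewrite hd addSn -addnS; apply: leq_trans h1; rewrite leq_add2l -add1n; exact: h3.
have [d dp] : exists d, proper_edge_colouring r' k d.
  apply: (IH r' v s' r's r'i).
  - rewrite -ltnS; exact: leq_trans (deg_sub1 (r'r v) ru nr'vu) dv.
  - move=> w r'w nws'.
    have rw := r'r _ _ r'w.
    have nwu : w != u by apply: contraNneq nr'vu => <-.
    have nws : w != s.
      apply: contraNneq nws' => ews; rewrite /s'; case: (eqVneq u s) => [eus|_].
        by move: nwu; rewrite ews eus eqxx.
      by rewrite ews eqxx.
    have hdw := dN rw nws.
    case: (boolP (missb g c w l)) => hm.
      have nl : l \notin S w by apply/negP => /(onlyu w rw) /eqP; rewrite (negPf nwu).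
      have := cnt w rw hm nl; rewrite cc // (negPf nws) => h.
      apply: leq_ltn_trans (deg_sub (r'r w)) _.
      by move: h; rewrite addn2 ltnS.
    move: hm => /forallPn [y0]; rewrite negb_imply negbK => /andP[gy0 cy0].
    have ry0 : r w y0 by case/and3P: gy0.
    have nr' : ~~ r' w y0 by rewrite /r' /bad1 gy0 cy0 /= andbF.
    by apply: leq_trans (deg_sub1 (r'r w) ry0 nr') _.
  - rewrite /s'; case: (eqVneq u s) => [eus|nus].
      by move=> h; rewrite h in nr'vu.
    move=> r'vs.
    case: (boolP (missb g c s l)) => hm.
      have nl : l \notin S s.
        by apply/negP => /(onlyu s rvs) esu; rewrite esu eqxx in nus.
      have := cnt s rvs hm nl; rewrite cc // eqxx => h.
      apply: leq_trans (deg_sub (r'r s)) _.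
      by move: h; rewrite addn1 ltnS.
    move: hm => /forallPn [y0]; rewrite negb_imply negbK => /andP[gy0 cy0].
    have ry0 : r s y0 by case/and3P: gy0.
    have nr' : ~~ r' s y0 by rewrite /r' /bad1 gy0 cy0 /= andbF.
    by rewrite -ltnS; apply: leq_trans (deg_sub1 (r'r s) ry0 nr') ds.
  - exists (fun x y => if c x y < l then c x y else (c x y - 1)).
    have hg : forall x y, rmv v r' x y -> g x y && (c x y != l).
      move=> x y /and3P[/and3P[rxy nb1 _] nx ny].
      by move: nb1; rewrite /bad1 /rmv rxy nx ny.
    split.
    + by move=> x y /hg /andP[gxy _]; rewrite (cs _ _ gxy).
    + by move=> x y /hg /andP[gxy nl]; apply: shift_lt => //; exact: cb.
    + move=> x y z /hg/andP[gxy ny] /hg/andP[gxz nz] nyz.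
      by apply: shift_inj => //; exact: cpr.
case: dp => dsy db dpr.
exists (fun x y => if r' x y then (if d x y < l then d x y else (d x y).+1) else (l : nat)).
split.
- move=> x y rxy; rewrite r's; case: ifP => // h.
  by rewrite (dsy y x h).
- move=> x y rxy; case: ifP => h; [exact: shift2_lt (db _ _ h) | exact: ltn_ord].
- move=> x y z rxy rxz nyz.
  case: (boolP (r' x y)) => hy; case: (boolP (r' x z)) => hz.
  + exact: shift2_inj (dpr _ _ _ hy hz nyz).
  + exact: shift2_ne.
  + rewrite eq_sym; exact: shift2_ne.
  + exfalso.
    have nuv' : u <> v by apply/eqP.
    have nyz' : y <> z by apply/eqP.
    case/orP: (hb x y rxy hy) => [/andP[gxy /eqP cy]|b2y];
      case/orP: (hb x z rxz hz) => [/andP[gxz /eqP cz]|b2z].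
    * by have := cpr _ _ _ gxy gxz nyz; rewrite cy cz eqxx.
    * have nxv : x != v by case/and3P: gxy.
      move: b2z; rewrite /bad2 (negPf nxv) /= => /andP[/eqP exu _].
      have := forallP (cm u ru l lu) y; rewrite -exu gxy /= cy eqxx //.
    * have nxv : x != v by case/and3P: gxz.
      move: b2y; rewrite /bad2 (negPf nxv) /= => /andP[/eqP exu _].
      have := forallP (cm u ru l lu) z; rewrite -exu gxz /= cz eqxx //.
    * move: b2y b2z; rewrite /bad2.
      by move=> /orP[]/andP[/eqP ex /eqP ey] /orP[]/andP[/eqP ex' /eqP ez]; congruence.
Qed.

End Cfg.

Section Viz.
Variable T : finType.

Lemma efk_all k : efk_prop T k.
Proof.
elim: k => [|k IH].
  move=> r v s rs ri dv _ _ [c cp]; exists c; apply: no_nbr rs _ cp.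
  move=> u; apply/negP => ru.
  have : 0 < deg r v by apply/card_gt0P; exists u; rewrite inE.
  by rewrite lt0n; move: dv; rewrite leqn0 => ->.
move=> r v s rs ri dv dN ds [c0 cp0].
case: (boolP [exists u, r v u]) => [/existsP [u0 ru0]|/existsPn none]; last first.
  by exists c0; apply: no_nbr rs none cp0.
pose s' := if r v s then s else u0.
have rvs' : r v s' by rewrite /s'; case: ifP.
have dN' : forall u, r v u -> u != s' -> deg r u < k.+1.
  move=> u ru nus; rewrite /s' in nus; case: (boolP (r v s)) => hs.
    by rewrite hs in nus; apply: dN.
  by apply: dN => //; apply: contraNneq hs => <-.
have ds' : deg r s' <= k.+1.
  rewrite /s'; case: ifP => hs; first exact: ds hs.
  have nus : u0 != s by apply: contraNneq (negbT hs) => <-.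
  exact: ltnW (dN _ ru0 nus).
have [S0 hv] := cfg_init rs ri dv dN' ds' rvs' cp0.
have [c' [S' [l [hv' hl]]]] := cfg_iter rs ri dv ds' rvs' hv (leqnn _).
exact: (reduce rs ri dv dN' ds' rvs' IH hv' hl).
Qed.

Lemma vizing m (r : rel T) : symmetric r -> irreflexive r -> (forall x, deg r x <= m) ->
  exists c, proper_edge_colouring r m.+1 c.
Proof.
move=> rs ri hd.
move: {2}#|[set x | [exists y, r x y]]| (leqnn #|[set x | [exists y, r x y]]|) => n.
elim: n r rs ri hd => [|n IH] r rs ri hd hn.
  case: (boolP [exists x, [exists y, r x y]]) => [/existsP [v /existsP [y0 rv]]|/existsPn none].
    have : 0 < #|[set x | [exists y, r x y]]|.
      by apply/card_gt0P; exists v; rewrite inE; apply/existsP; exists y0.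
    by move: hn; rewrite leqn0 => /eqP ->.
  exists (fun _ _ => 0).
  have noe : forall x y, r x y = false.
    move=> x y; apply/negbTE/negP => rxy; apply: (negP (none x)); apply/existsP; by exists y.
  by split => x y; rewrite noe.
case: (boolP [exists x, [exists y, r x y]]) => [/existsP [v /existsP [y0 rv]]|/existsPn none];
  last first.
  exists (fun _ _ => 0).
  have noe : forall x y, r x y = false.
    move=> x y; apply/negbTE/negP => rxy; apply: (negP (none x)); apply/existsP; by exists y.
  by split => x y; rewrite noe.
have [c0 cp0] : exists c0, proper_edge_colouring (rmv v r) m.+1 c0.
  apply: IH.
  - exact: rmv_sym.
  - exact: rmv_irr.
  - move=> x; apply: leq_trans (hd x); apply: deg_sub => y /and3P[].
    by [].
  - have vin : v \in [set x | [exists y, r x y]] by rewrite inE; apply/existsP; exists y0.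
    have : #|[set x | [exists y, rmv v r x y]]| <= #|[set x | [exists y, r x y]] :\ v|.
      apply: subset_leq_card; apply/subsetP => x; rewrite !inE => /existsP [y /and3P[rxy nxv _]].
      by rewrite nxv /=; apply/existsP; exists y.
    move: hn; rewrite (cardsD1 v) vin /= add1n ltnS => h1 h2.
    exact: leq_trans h2 h1.
apply: (efk_all (r := r) (v := v) (s := v) rs ri).
- exact: leq_trans (hd v) (leqnSn _).
- by move=> u _ _; exact: hd.
- by rewrite ri.
- by exists c0.
Qed.

End Viz.

Lemma lt_ne_add a b n : a < n -> (n + b != a).
Proof. lia. Qed.

Section Rev.
Variable T : eqType.

Lemma pairmap_rev (f : T -> T -> nat) x p :
  pairmap f (last x p) (rev (belast x p)) = rev (pairmap (fun a b => f b a) x p).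
Proof.
elim/last_ind: p => [|q z IH] //=.
rewrite last_rcons belast_rcons -cats1 pairmap_cat rev_cat.
rewrite (lastI x q) rev_rcons /= IH.
by [].
Qed.

Lemma pairmap_eq_path (R : rel T) (f g : T -> T -> nat) x p :
  (forall a b, R a b -> f a b = g a b) -> path R x p -> pairmap f x p = pairmap g x p.
Proof.
move=> h; elim: p x => [|y p IH] x //= /andP[rxy pp].
by rewrite h // IH.
Qed.

Lemma mem_pairmapP (R : rel T) (f : T -> T -> nat) z p l : path R z p ->
  l \in pairmap f z p -> exists a b, [/\ a \in z :: p, b \in z :: p, R a b & l = f a b].
Proof.
elim: p z => [|y p IH] z //= /andP[rzy pp]; rewrite inE => /orP[/eqP ->|hl].
  by exists z, y; rewrite !inE !eqxx orbT.
have [a [b [ha hb rab ->]]] := IH y pp hl.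
by exists a, b; split => //; rewrite inE ?ha ?hb orbT.
Qed.

Definition rbw (R : rel T) (f : T -> T -> nat) x y p :=
  [/\ path R x p, last x p = y, uniq (x :: p) & uniq (pairmap f x p)].

Lemma rbw_rev (R : rel T) f x y p : symmetric R -> (forall a b, R a b -> f a b = f b a) ->
  rbw R f x y p -> rbw R f y x (rev (belast x p)).
Proof.
move=> rs fs [hp hl hu hf].
have ey : y = last x p by rewrite hl.
split.
- rewrite ey rev_path; move: hp; apply: sub_path => a b; by rewrite rs.
- case: p hp hl hu hf ey => [|z p] /= _ hl _ _ ey; first by rewrite ey.
  by rewrite rev_cons last_rcons.
- by rewrite ey -rev_rcons -lastI rev_uniq.
- rewrite ey pairmap_rev rev_uniq.
  by rewrite (pairmap_eq_path (g := f) (fun a b rab => esym (fs a b rab)) hp).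
Qed.

End Rev.

Section Tree.
Variable T : finType.
Variable e : rel T.
Hypothesis e_sym : symmetric e.
Hypothesis e_irr : irreflexive e.
Variable v0 : T.
Variable d : T -> nat.
Variable par : T -> T.
Hypothesis d0 : forall u, (d u == 0) = (u == v0).
Hypothesis par_e : forall u, 0 < d u -> e u (par u).
Hypothesis par_d : forall u, 0 < d u -> d (par u) < d u.
Variable c : T -> T -> nat.
Variable chi : nat.
Hypothesis cp : proper_edge_colouring e chi c.

Definition BB := [set u | 1 < d u].
Definition idx u := index u (enum BB).
Definition isnew x y := (y == par x) && (1 < d x).
Definition cn x y := if isnew x y then chi + idx x else if isnew y x then chi + idx y else c x y.
Definition tedge : rel T := fun a b => ((b == par a) && (0 < d a)) || ((a == par b) && (0 < d b)).

Lemma d1 u : d u = 1 -> par u = v0.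
Proof. by move=> h; apply/eqP; rewrite -(d0 (par u)); have := par_d (u := u); rewrite h => /(_ isT); lia. Qed.

Lemma idx_lt u : u \in BB -> idx u < #|BB|.
Proof. by move=> h; rewrite /idx cardE index_mem mem_enum. Qed.

Lemma idx_inj u w : u \in BB -> w \in BB -> u != w -> idx u != idx w.
Proof.
move=> hu hw; apply: contraNN => /eqP h.
by have := congr1 (nth u (enum BB)) h; rewrite /idx !nth_index ?mem_enum // => ->.
Qed.

Lemma cn_sym x y : e x y -> cn x y = cn y x.
Proof.
case: cp => cs _ _ exy; rewrite /cn.
case: (boolP (isnew x y)) => hxy; case: (boolP (isnew y x)) => hyx //; last exact: cs.
exfalso; move: hxy hyx => /andP[/eqP ey dx] /andP[/eqP ex dy].
have := par_d (u := x); have := par_d (u := y); rewrite -ey -ex; lia.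
Qed.

Lemma cn_pec : proper_edge_colouring e (chi + #|BB|) cn.
Proof.
have hB : forall u w, isnew u w -> u \in BB by move=> u w /andP[_ h]; rewrite inE.
case: (cp) => cs cb cpr; split.
- exact: cn_sym.
- move=> x y exy; rewrite /cn.
  case: ifP => h1; first by rewrite ltn_add2l; apply: idx_lt; exact: hB h1.
  case: ifP => h2; first by rewrite ltn_add2l; apply: idx_lt; exact: hB h2.
  exact: ltn_addr (cb _ _ exy).
- move=> x y z exy exz nyz; rewrite /cn.
  have nxy : x != y by apply: contraTneq exy => ->; rewrite e_irr.
  have nxz : x != z by apply: contraTneq exz => ->; rewrite e_irr.
  case: (boolP (isnew x y)) => hxy; case: (boolP (isnew x z)) => hxz.
  + move: hxy hxz => /andP[/eqP ey _] /andP[/eqP ez _].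
    by rewrite ey ez eqxx in nyz.
  + case: ifP => hzx.
      by rewrite eqn_add2l; apply: idx_inj => //; [exact: hB hxy | exact: hB hzx].
    exact: lt_ne_add (cb _ _ exz).
  + case: ifP => hyx.
      by rewrite eqn_add2l; apply: idx_inj => //; [exact: hB hyx | exact: hB hxz | rewrite eq_sym].
    rewrite eq_sym; exact: lt_ne_add (cb _ _ exy).
  + case: ifP => hyx; case: ifP => hzx.
    * by rewrite eqn_add2l; apply: idx_inj => //; [exact: hB hyx | exact: hB hzx].
    * exact: lt_ne_add (cb _ _ exz).
    * rewrite eq_sym; exact: lt_ne_add (cb _ _ exy).
    * exact: cpr.
Qed.

Lemma col_new u : 1 < d u -> cn u (par u) = chi + idx u.
Proof. by move=> h; rewrite /cn /isnew eqxx h. Qed.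

Lemma col_old u : d u = 1 -> cn u (par u) = c u v0.
Proof.
move=> h; rewrite /cn /isnew (d1 h) h /= andbF.
have -> : d v0 = 0 by apply/eqP; rewrite d0.
by rewrite andbF.
Qed.

Lemma key a x : 0 < d a -> 0 < d x -> a != x -> cn a (par a) != cn x (par x).
Proof.
case: (cp) => cs cb cpr.
have hc : forall u, d u = 1 -> c u v0 < chi.
  by move=> u h; apply: cb; rewrite -(d1 h); apply: par_e; rewrite h.
move=> da dx nax.
case: (ltnP 1 (d a)) => ha; case: (ltnP 1 (d x)) => hx.
- by rewrite !col_new // eqn_add2l; apply: idx_inj; rewrite ?inE.
- have x1 : d x = 1 by lia.
  rewrite (col_new ha) (col_old x1).
  exact: lt_ne_add (hc x x1).
- have a1 : d a = 1 by lia.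
  rewrite (col_new hx) (col_old a1).
  rewrite eq_sym; exact: lt_ne_add (hc a a1).
- have a1 : d a = 1 by lia.
  have x1 : d x = 1 by lia.
  rewrite !col_old //.
  have ea : e v0 a by rewrite e_sym -(d1 a1); apply: par_e; rewrite a1.
  have ex : e v0 x by rewrite e_sym -(d1 x1); apply: par_e; rewrite x1.
  by rewrite -(cs _ _ ea) -(cs _ _ ex); apply: cpr.
Qed.

Lemma tedge_e a b : tedge a b -> e a b.
Proof.
by case/orP => /andP[/eqP -> h]; [exact: par_e | rewrite e_sym; exact: par_e].
Qed.

Lemma tedge_sym : symmetric tedge.
Proof. by move=> a b; rewrite /tedge orbC. Qed.

Lemma claim N : forall x y, d x + d y <= N -> exists p, rbw tedge cn x y p.
Proof.
have cns : forall a b, tedge a b -> cn a b = cn b a by move=> a b /tedge_e; exact: cn_sym.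
elim: N => [|N IH] x y hN.
  have : x == y by have := d0 x; have := d0 y; move=> h1 h2; move: hN;
    rewrite leqn0 addn_eq0 => /andP[]; rewrite h1 h2 => /eqP -> /eqP ->.
  by move/eqP ->; exists [::]; split.
case: (eqVneq x y) => [<-|nxy]; first by exists [::]; split.
have main : forall x y, x != y -> d y <= d x -> d x + d y <= N.+1 ->
    exists p, rbw tedge cn x y p.
  move=> {nxy hN} {}x {}y nxy hyx hN.
  have dx : 0 < d x.
    rewrite lt0n; apply: contraNneq nxy => hx0.
    have hy0 : d y = 0 by lia.
    have ex : x == v0 by rewrite -(d0 x) hx0.
    have ey : y == v0 by rewrite -(d0 y) hy0.
    by rewrite (eqP ex) (eqP ey).
  set z := par x.
  have [p [hp hl hu hf]] := IH z y ltac:(have := par_d dx; rewrite -/z; lia).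
  case: (boolP (x \in z :: p)) => xin.
    have exz : e x z by rewrite /z; exact: par_e.
    have nxz : x != z by apply: contraTneq exz => ->; rewrite e_irr.
    move: xin; rewrite inE (negPf nxz) /= => xin.
    move: hp hl hu hf; case/splitPr: xin => p1 p2 hp hl hu hf.
    exists p2; split.
    - by move: hp; rewrite cat_path => /andP[_] /= /andP[].
    - by rewrite -hl last_cat.
    - by move: hu; rewrite -cat_cons cat_uniq => /and3P[].
    - by move: hf; rewrite pairmap_cat cat_uniq /= => /and3P[_ _ /andP[]].
  exists (z :: p); split.
  - by rewrite /= hp andbT /tedge eqxx dx.
  - by [].
  - by rewrite cons_uniq xin hu.
  - rewrite /= hf andbT; apply/negP => /(mem_pairmapP hp) [a [b [ha hb tab hab]]].
    have nax : a != x by apply: contraTneq ha => ->.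
    have nbx : b != x by apply: contraTneq hb => ->.
    case/orP: tab => /andP[/eqP eb da].
      by have := key da dx nax; rewrite -eb -/z hab eqxx.
    have eba : e b a by rewrite eb; exact: par_e.
    by have := key da dx nbx; rewrite -eb -/z hab (cn_sym eba) eqxx.
case: (leqP (d y) (d x)) => h; first exact: main.
have [p hp] := main y x ltac:(by rewrite eq_sym) (ltnW h) ltac:(lia).
by exists (rev (belast y p)); apply: rbw_rev => //; exact: tedge_sym.
Qed.

End Tree.

Lemma min_exists (P : nat -> Prop) : (exists n, P n) -> exists m, is_min P m.
Proof.
move=> [n Pn].
suff : forall N n, n <= N -> P n -> exists m, is_min P m by move/(_ n n (leqnn n) Pn).
elim=> [|N IH] {Pn}n hn Pn.
  by exists n; split => // k _; move: hn; rewrite leqn0 => /eqP ->.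
case: (classic (exists k, P k /\ k < n)) => [[k [Pk kn]]|H].
  by apply: (IH k) => //; lia.
exists n; split => // k Pk; rewrite leqNgt; apply/negP => kn.
by apply: H; exists k.
Qed.

Section Reach.
Variable T : finType.
Variable e : rel T.

Fixpoint reach (n : nat) (x y : T) : bool :=
  if n is n'.+1 then [exists z, e x z && reach n' z y] else x == y.

Lemma walk_reach x y n : walk_len e x y n <-> reach n x y.
Proof.
split.
  move=> [p [hp hl hs]]; elim: p x n hp hl hs => [|z p IH] x n /=.
    by move=> _ /= -> <- /=.
  move=> /andP[exz pp] hl hs; rewrite -hs /=; apply/existsP; exists z.
  by rewrite exz (IH z (size p)).
elim: n x => [|n IH] x /=.
  by move=> /eqP ->; exists [::].
move=> /existsP [z /andP[exz hr]]; have [p [hp hl hs]] := IH z hr.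
by exists (z :: p); rewrite /= exz hp hl hs.
Qed.

Hypothesis e_conn : forall x y : T, connect e x y.

Lemma ex_reach x y : exists n, reach n x y.
Proof.
have /connectP [p hp hl] := e_conn x y.
by exists (size p); apply/walk_reach; exists p.
Qed.

Definition dist x y := ex_minn (ex_reach x y).

Lemma dist_reach x y : reach (dist x y) x y.
Proof. by rewrite /dist; case: ex_minnP. Qed.

Lemma dist_min x y n : reach n x y -> dist x y <= n.
Proof. by rewrite /dist; case: ex_minnP => m _ h /h. Qed.

Lemma is_dist_dist x y : is_dist e x y (dist x y).
Proof.
split; first by apply/walk_reach; exact: dist_reach.
by move=> k /walk_reach; exact: dist_min.
Qed.

Lemma is_dist_uniq x y d : is_dist e x y d -> d = dist x y.
Proof.
move=> [h1 h2]; apply/eqP; rewrite eqn_leq h2 ?andbT; last exact: (is_dist_dist x y).1.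
exact: (is_dist_dist x y).2.
Qed.

Lemma dist0 x y : (dist x y == 0) = (x == y).
Proof.
apply/idP/idP => [/eqP h|/eqP ->].
  by have := dist_reach x y; rewrite h.
by rewrite -leqn0; apply: dist_min; rewrite /= eqxx.
Qed.

Lemma dist_pred u v : 0 < dist u v -> exists z, e u z && (dist z v < dist u v).
Proof.
have := dist_reach u v; case E: (dist u v) => [|m] //= /existsP [z /andP[euz hr]] _.
by exists z; rewrite euz /=; have := dist_min hr; rewrite ltnS.
Qed.

Lemma dist_nb u v : e u v -> dist u v <= 1.
Proof. by move=> euv; apply: dist_min => /=; apply/existsP; exists v; rewrite euv eqxx. Qed.

End Reach.

Lemma pairmap_iota (T : eqType) (R : rel T) f k x p : path R x p ->
  (forall a b, R a b -> f a b < k) -> {subset pairmap f x p <= iota 0 k}.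
Proof.
move=> hp hb l /(mem_pairmapP hp) [a [b [_ _ eab ->]]].
by rewrite mem_iota /= add0n; exact: hb.
Qed.

Theorem theorem2p2 (T : finType) (e : rel T)
  (e_sym : symmetric e) (e_irr : irreflexive e)
  (e_conn : forall x y : T, connect e x y) (nontriv : 1 < #|T|) :
  exists k chi D : nat,
    is_prc e k /\ is_chromatic_index e chi /\ is_diam e D /\
    maxn (maxdeg e) D <= k /\
    k <= chi + (#|T| - 1 - maxdeg e) /\
    (chi = maxdeg e -> chi + (#|T| - 1 - maxdeg e) = #|T| - 1) /\
    (chi <> maxdeg e -> chi + (#|T| - 1 - maxdeg e) = #|T|).
Proof.
have nT : 0 < #|T| by lia.
have [v0 hv0] := eq_bigmax (fun v : T => #|[set u | e v u]|) nT.
have hD : maxdeg e = deg e v0 by rewrite /maxdeg hv0.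
have hle : forall x, deg e x <= maxdeg e.
  by move=> x; rewrite /maxdeg; exact: (leq_bigmax (F := fun v => #|[set u | e v u]|) x).
have Dn : maxdeg e <= #|T| - 1.
  rewrite hD /deg.
  have : [set u | e v0 u] \subset [set~ v0].
    by apply/subsetP => u; rewrite !inE; apply: contraTneq => ->; rewrite e_irr.
  by move/subset_leq_card; rewrite cardsC1; lia.
have lb : forall k c, proper_edge_colouring e k c -> maxdeg e <= k.
  move=> k c hc; rewrite hD; case: k hc => [|k] hc.
    rewrite leqn0; apply/eqP; apply: eq_card0 => u; rewrite !inE.
    by apply/negbTE/negP => h; case: hc => _ /(_ _ _ h).
  by have := card_miss1 v0 hc; lia.
have hviz := vizing e_sym e_irr hle.
have [chi [hchi chimin]] := min_exists (P := fun k => exists c, proper_edge_colouring e k c) (ex_intro _ _ hviz).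
have [c hc] := hchi.
have chi_lo : maxdeg e <= chi := lb _ _ hc.
have chi_hi : chi <= (maxdeg e).+1 := chimin _ hviz.
pose d := fun u => dist e_conn u v0.
pose par := fun u => if [pick z | e u z && (d z < d u)] is Some z then z else u.
have d0 : forall u, (d u == 0) = (u == v0) := fun u => dist0 e_conn u v0.
have hpar : forall u, 0 < d u -> e u (par u) && (d (par u) < d u).
  move=> u du; rewrite /par; case: pickP => [z //|none].
  have [z hz] := dist_pred du.
  by have := none z; rewrite hz.
have par_e : forall u, 0 < d u -> e u (par u) by move=> u /hpar /andP[].
have par_d : forall u, 0 < d u -> d (par u) < d u by move=> u /hpar /andP[].
pose cc := cn d par c chi.
have ccp := cn_pec e_irr par_d hc.
have hrb : properly_rainbow_connected e (chi + #|BB d|) cc.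
  split => // x y nxy.
  have [p [hp hl hu hf]] := claim e_sym e_irr d0 par_e par_d hc (leqnn (d x + d y)).
  exists p; split => //.
  by move: hp; apply: sub_path => a b; exact: (tedge_e e_sym par_e).
have cardB : #|BB d| = #|T| - 1 - maxdeg e.
  have hC : ~: BB d = v0 |: [set u | e v0 u].
    apply/setP => u; rewrite !inE -leqNgt.
    apply/idP/idP => [hu|/orP[/eqP ->|ev]].
    - case: (eqVneq u v0) => //= nuv.
      have du : 0 < d u by rewrite lt0n d0.
      have hpu := par_e _ du; have hpd := par_d _ du.
      have : par u == v0 by rewrite -d0; lia.
      by move/eqP => pv; rewrite e_sym -pv.
    - by have := d0 v0; rewrite eqxx => /eqP ->.
    - by rewrite /d; apply: dist_nb; rewrite e_sym.
  have := cardsC (BB d); rewrite hC cardsU1 inE e_irr /= hD /deg; lia.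
have [k [hk kmin]] := min_exists (P := fun k => exists c, properly_rainbow_connected e k c) (ex_intro _ _ (ex_intro _ _ hrb)).
have kup : k <= chi + #|BB d| := kmin _ (ex_intro _ _ hrb).
have nTT : 0 < #|{: T * T}| by apply/card_gt0P; exists (v0, v0).
have [p0 hp0] := eq_bigmax (fun p : T * T => dist e_conn p.1 p.2) nTT.
set D := \max_(p : T * T) dist e_conn p.1 p.2.
have hdiam : is_diam e D.
  split; first by exists p0.1, p0.2; rewrite /D hp0; exact: (is_dist_dist e_conn).
  move=> d' [x [y hxy]]; rewrite (is_dist_uniq e_conn hxy).
  exact: (leq_bigmax (F := fun p : T * T => dist e_conn p.1 p.2) (x, y)).
have [ck [ckp ckr]] := hk.
have Dk : D <= k.
  rewrite /D hp0; case: (eqVneq p0.1 p0.2) => [E|neq].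
    by rewrite E; have := dist0 e_conn p0.2 p0.2; rewrite eqxx => /eqP ->.
  have [p [hp hl hu hf]] := ckr _ _ neq.
  apply: leq_trans (_ : size p <= k).
    by apply: dist_min; apply/walk_reach; exists p.
  case: ckp => _ cb _.
  rewrite -(size_pairmap ck p0.1) -(size_iota 0 k).
  exact: uniq_leq_size hf (pairmap_iota hp cb).
exists k, chi, D; split => //; split => //; split => //.
split; first by rewrite geq_max Dk (lb _ _ ckp).
split; first by rewrite -cardB.
split; lia.
Qed.
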